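(* Let $\theta:H\to H$ be an endomorphism and $E_1,\dots,E_t$ $n$-ary Endo-primary hyperideals of $H$ associated with $\theta$ such that $rad(E_j)=rad(E_l)$ for all $j,l\in\{1,\dots,t\}$. Then $\bigcap_{j=1}^tE_j$ is an $n$-ary Endo-primary hyperideal of $H$ associated with $\theta$.
   Context: Throughout, $(H,h,k)$ is a commutative Krasner $(m,n)$-hyperring with scalar identity $1_H$: $(H,h)$ is a canonical $m$-ary hypergroup (a commutative associative $m$-ary hyperoperation $h:H^m\to\mathcal P^*(H)$ with a unique zero $0$ such that $h(u,0^{(m-1)})=\{u\}$, unique inverses, reversibility), $k:H^n\to H$ is a commutative associative $n$-ary operation distributing over $h$ in each argument, $k(0,u_2^n)=0$, and $k(u,1_H^{(n-1)})=u$ for all $u$. Notation: $u_i^j$ denotes $u_i,\dots,u_j$ (empty if $j<i$); $u^{(t)}$ denotes $u$ repeated $t$ times; for $r=l(n-1)+1$, $k_{(l)}(u_1^r)=k(k(\cdots k(k(u_1^n),u_{n+1}^{2n-1})\cdots),u_{r-n+1}^{r})$. A hyperideal is a nonempty $I\subseteq H$ such that $(I,h)$ is an $m$-ary subhypergroup and $k(u_1^{i-1},I,u_{i+1}^n)\subseteq I$ for all $u_j\in H$. An endomorphism is a map $\theta$ with $\theta(h(u_1^m))=h(\theta(u_1),\dots,\theta(u_m))$, $\theta(k(u_1^n))=k(\theta(u_1),\dots,\theta(u_n))$, $\theta(1_H)=1_H$. $rad(E)$ is the set of $u$ with $k(u^{(r)},1_H^{(n-r)})\in E$ for some $r\le n$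 or $k_{(l)}(u^{(r)})\in E$ for some $r=l(n-1)+1>n$ (equivalently the intersection of all $n$-ary prime hyperideals containing $E$). A proper hyperideal $E$ is an $n$-ary Endo-primary hyperideal associated with $\theta$ if for all $u_1,\dots,u_n\in H$, $k(u_1^n)\in E$ implies that for some $i$, $u_i\in E$ or $\theta\big(k(u_1^{i-1},1_H,u_{i+1}^n)\big)\in rad(E)$. *)

(* Defs.v *)
(* lists encode argument tuples of the m-ary / n-ary operations. *)
From Stdlib Require Import List Permutation Arith.
Import ListNotations.

Definition sing {H : Type} (x : H) : H -> Prop := fun y => y = x.
Definition seteq {H : Type} (A B : H -> Prop) : Prop := forall z, A z <-> B z.

(* replace the i-th (0-based) entry of xs by y *)
Definition repl {H : Type} (i : nat) (y : H) (xs : list H) : list H :=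
  firstn i xs ++ y :: skipn (S i) xs.

Definition hS {H : Type} (h : list H -> H -> Prop) (As : list (H -> Prop)) : H -> Prop :=
  fun z => exists xs, Forall2 (fun x A => A x) xs As /\ h xs z.

Record KrasnerHyperring := {
  car : Type;
  ar_m : nat;
  ar_n : nat;
  hop : list car -> car -> Prop;   (* m-ary hyperoperation h, meaningful on lists of length m *)
  kop : list car -> car;           (* n-ary operation k, meaningful on lists of length n *)
  zero : car;
  one : car;
  inv : car -> car;
  m_ge2 : 2 <= ar_m;
  n_ge2 : 2 <= ar_n;
  (* (H,h) canonical m-ary hypergroup *)
  hop_nonempty : forall xs, length xs = ar_m -> exists z, hop xs z;
  hop_assoc : forall xs i, length xs = 2 * ar_m - 1 -> i <= ar_m - 1 ->
    seteq (hS hop (map sing (firstn i xs) ++ hop (firstn ar_m (skipn i xs))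
                     :: map sing (skipn (i + ar_m) xs)))
          (hS hop (hop (firstn ar_m xs) :: map sing (skipn ar_m xs)));
  hop_comm : forall xs ys, length xs = ar_m -> Permutation xs ys -> seteq (hop xs) (hop ys);
  hop_zero : forall x, seteq (hop (x :: repeat zero (ar_m - 1))) (sing x);
  hop_zero_unique : forall e, (forall x, seteq (hop (x :: repeat e (ar_m - 1))) (sing x)) -> e = zero;
  hop_inv : forall x, hop (x :: inv x :: repeat zero (ar_m - 2)) zero;
  hop_inv_unique : forall x y, hop (x :: y :: repeat zero (ar_m - 2)) zero -> y = inv x;
  hop_rev : forall xs x i, length xs = ar_m -> i < ar_m -> hop xs x ->
    hop (x :: map inv (firstn i xs ++ skipn (S i) xs)) (nth i xs zero);
  kop_assoc : forall xs i, length xs = 2 * ar_n - 1 -> i <= ar_n - 1 ->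
    kop (firstn i xs ++ kop (firstn ar_n (skipn i xs)) :: skipn (i + ar_n) xs)
    = kop (kop (firstn ar_n xs) :: skipn ar_n xs);
  kop_comm : forall xs ys, length xs = ar_n -> Permutation xs ys -> kop xs = kop ys;
  kop_distr : forall xs i ys, length xs = ar_n -> i < ar_n -> length ys = ar_m ->
    seteq (fun z => exists y, hop ys y /\ z = kop (repl i y xs))
          (hop (map (fun a => kop (repl i a xs)) ys));
  kop_zero : forall us, length us = ar_n - 1 -> kop (zero :: us) = zero;
  kop_one : forall x, kop (x :: repeat one (ar_n - 1)) = x
}.

Section Defs.
Variable R : KrasnerHyperring.
Local Notation H := (car R).
Local Notation m := (ar_m R).
Local Notation n := (ar_n R).
Local Notation h := (hop R).
Local Notation k := (kop R).

Definition hyperideal (I : H -> Prop) : Prop :=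
  (exists x, I x) /\
  I (zero R) /\
  (forall xs, length xs = m -> Forall I xs -> forall z, h xs z -> I z) /\
  (forall x, I x -> I (inv R x)) /\
  (forall xs i a, length xs = n -> i < n -> I a -> I (k (repl i a xs))).

Definition proper (I : H -> Prop) : Prop := exists x, ~ I x.

Definition endomorphism (th : H -> H) : Prop :=
  (forall xs, length xs = m -> seteq (fun z => exists y, h xs y /\ z = th y) (h (map th xs))) /\
  (forall xs, length xs = n -> th (k xs) = k (map th xs)) /\
  th (one R) = one R.

Fixpoint kl (l : nat) (xs : list H) : H :=
  match l with
  | O => hd (zero R) xs
  | S l' => k (kl l' (firstn (l' * (n - 1) + 1) xs)
               :: firstn (n - 1) (skipn (l' * (n - 1) + 1) xs))
  end.

Definition rad (E : H -> Prop) : H -> Prop := fun u =>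
  (exists r, 1 <= r <= n /\ E (k (repeat u r ++ repeat (one R) (n - r)))) \/
  (exists l, l * (n - 1) + 1 > n /\ E (kl l (repeat u (l * (n - 1) + 1)))).

Definition endo_primary (th : H -> H) (E : H -> Prop) : Prop :=
  hyperideal E /\ proper E /\
  forall us, length us = n -> E (k us) ->
    exists i, i < n /\ (E (nth i us (zero R)) \/ rad E (th (k (repl i (one R) us)))).

End Defs.

(* Main.v *)
Require Import Defs.
From Stdlib Require Import List Arith Lia Permutation Classical.
Import ListNotations.

Lemma firstn_rep {A} (x : A) a b : firstn a (repeat x b) = repeat x (Nat.min a b).
Proof. revert b; induction a; intros [|b]; simpl; auto. now rewrite IHa. Qed.
Lemma skipn_rep {A} (x : A) a b : skipn a (repeat x b) = repeat x (b - a).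
Proof. revert b; induction a; intros [|b]; simpl; auto. Qed.
Lemma firstn_len {A} (l1 l2 : list A) j : firstn (length l1 + j) (l1 ++ l2) = l1 ++ firstn j l2.
Proof. apply firstn_app_2. Qed.
Lemma skipn_len {A} (l1 l2 : list A) j : skipn (length l1 + j) (l1 ++ l2) = skipn j l2.
Proof. induction l1; simpl; auto. Qed.

Definition kmul (R : KrasnerHyperring) (x y : car R) : car R :=
  kop R (x :: y :: repeat (one R) (ar_n R - 2)).
Definition kprod (R : KrasnerHyperring) (xs : list (car R)) : car R :=
  fold_right (kmul R) (one R) xs.
Fixpoint kpow (R : KrasnerHyperring) (x : car R) (r : nat) : car R :=
  match r with O => one R | S r' => kmul R x (kpow R x r') end.

Lemma nge (R : KrasnerHyperring) : ar_n R = S (S (ar_n R - 2)).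
Proof. pose proof (n_ge2 R); lia. Qed.

Lemma mul_comm R x y : kmul R x y = kmul R y x.
Proof. unfold kmul. apply kop_comm. simpl; rewrite repeat_length; pose proof (n_ge2 R); lia.
  constructor. Qed.

Lemma mul_one_r R x : kmul R x (one R) = x.
Proof. unfold kmul. rewrite <- (kop_one R x) at 2. f_equal.
  replace (ar_n R - 1) with (S (ar_n R - 2)) by (pose proof (n_ge2 R); lia). reflexivity. Qed.
Lemma mul_one_l R x : kmul R (one R) x = x.
Proof. rewrite mul_comm; apply mul_one_r. Qed.

Lemma k_cons R x ys : length ys = ar_n R - 1 ->
  kop R (x :: ys) = kmul R x (kop R (ys ++ [one R])).
Proof.
  intros Hl. pose proof (n_ge2 R) as Hn.
  pose proof (kop_assoc R (x :: ys ++ one R :: repeat (one R) (ar_n R - 2)) 1) as A.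
  rewrite length_cons, length_app in A; simpl in A. rewrite repeat_length in A.
  specialize (A ltac:(lia) ltac:(lia)).
  simpl in A.
  replace (ar_n R) with (length ys + 1) in A at 1 by lia.
  rewrite firstn_len in A. simpl in A.
  replace (ar_n R) with (length ys + 1) in A at 1 by lia.
  rewrite skipn_len in A. simpl in A.
  replace (ar_n R) with (S (length ys)) in A at 1 by lia. simpl in A.
  replace (ar_n R) with (length ys + 1) in A at 1 by lia.
  replace (length ys + 1) with (S (length ys + 0)) in A by lia.
  replace (ar_n R) with (S (length ys + 0)) in A at 2 by lia.
  simpl firstn in A; simpl skipn in A.
  rewrite firstn_len, skipn_len in A. simpl in A.
  rewrite app_nil_r in A.
  replace (length ys - 1) with (ar_n R - 2) in A by lia.
  unfold kmul. rewrite A.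
  replace (one R :: repeat (one R) (ar_n R - 2)) with (repeat (one R) (ar_n R - 1)).
  symmetry; apply kop_one.
  replace (ar_n R - 1) with (S (ar_n R - 2)) by lia. reflexivity.
Qed.

Lemma k_pad R zs : length zs <= ar_n R ->
  kop R (zs ++ repeat (one R) (ar_n R - length zs)) = kprod R zs.
Proof.
  pose proof (n_ge2 R) as Hn.
  induction zs as [|x zs IH]; intros Hl; simpl.
  - rewrite Nat.sub_0_r.
    replace (repeat (one R) (ar_n R)) with (one R :: repeat (one R) (ar_n R - 1)).
    apply kop_one. replace (ar_n R) with (S (ar_n R - 1)) at 2 by lia. reflexivity.
  - simpl in Hl. rewrite k_cons.
    2:{ rewrite length_app, repeat_length. lia. }
    f_equal. rewrite <- app_assoc. simpl. rewrite <- repeat_cons.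
    rewrite <- IH by lia. do 2 f_equal. replace (ar_n R - length zs) with (S (ar_n R - S (length zs))) by lia. reflexivity.
Qed.

Lemma k_prod R xs : length xs = ar_n R -> kop R xs = kprod R xs.
Proof. intros H. rewrite <- k_pad by lia. rewrite H, Nat.sub_diag. simpl. now rewrite app_nil_r. Qed.

Lemma prod_ones R j : kprod R (repeat (one R) j) = one R.
Proof. induction j; simpl; auto. unfold kprod in *. simpl. rewrite IHj. apply mul_one_r. Qed.

Lemma prod_app R l1 l2 : kprod R (l1 ++ l2) = fold_right (kmul R) (kprod R l2) l1.
Proof. unfold kprod. apply fold_right_app. Qed.

Lemma fold_ones R j z : fold_right (kmul R) z (repeat (one R) j) = z.
Proof. induction j; simpl; auto. rewrite IHj. apply mul_one_l. Qed.

Lemma mul_assoc R x y z : kmul R x (kmul R y z) = kmul R (kmul R x y) z.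
Proof.
  pose proof (n_ge2 R) as Hn.
  set (l1 := y :: repeat (one R) (ar_n R - 2)).
  set (l2 := z :: repeat (one R) (ar_n R - 2)).
  assert (L1 : length l1 = ar_n R - 1) by (unfold l1; simpl; rewrite repeat_length; lia).
  assert (E1 : firstn (ar_n R) (skipn 1 (x :: l1 ++ l2)) = l1 ++ [z]).
  { change (skipn 1 (x :: l1 ++ l2)) with (l1 ++ l2). replace (ar_n R) with (length l1 + 1) by lia. rewrite firstn_len. reflexivity. }
  assert (E2 : skipn (1 + ar_n R) (x :: l1 ++ l2) = repeat (one R) (ar_n R - 2)).
  { replace (1 + ar_n R) with (length (x :: l1) + 1) by (change (length (x :: l1)) with (S (length l1)); lia).
    change (x :: l1 ++ l2) with ((x :: l1) ++ l2). rewrite skipn_len. reflexivity. }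
  assert (E3 : firstn (ar_n R) (x :: l1 ++ l2) = x :: l1).
  { replace (ar_n R) with (length (x :: l1) + 0) by (change (length (x :: l1)) with (S (length l1)); lia).
    change (x :: l1 ++ l2) with ((x :: l1) ++ l2). rewrite firstn_len. apply app_nil_r. }
  assert (E4 : skipn (ar_n R) (x :: l1 ++ l2) = l2).
  { replace (ar_n R) with (length (x :: l1) + 0) by (change (length (x :: l1)) with (S (length l1)); lia).
    change (x :: l1 ++ l2) with ((x :: l1) ++ l2). rewrite skipn_len. reflexivity. }
  pose proof (kop_assoc R (x :: l1 ++ l2) 1) as A.
  rewrite E1, E2, E3, E4 in A.
  specialize (A ltac:(rewrite length_cons, length_app, L1; unfold l2; rewrite length_cons, repeat_length; lia) ltac:(lia)).
  simpl firstn in A. simpl app in A.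
  fold (kmul R x (kop R (l1 ++ [z]))) in A. unfold l2 in A.
  fold (kmul R (kop R (x :: l1)) z) in A. unfold l1 in A.
  fold (kmul R x y) in A. rewrite <- A. unfold kmul at 1. f_equal. f_equal. symmetry.
  f_equal. rewrite k_prod. 2:{ rewrite length_cons, length_app, repeat_length. simpl. lia. }
  unfold kprod. simpl. rewrite fold_right_app. simpl. rewrite mul_one_r, fold_ones. reflexivity.
Qed.

Lemma repl_nil {A} i (y : A) : repl i y [] = [y].
Proof. unfold repl. destruct i; reflexivity. Qed.
Lemma repl_0 {A} (y a : A) l : repl 0 y (a :: l) = y :: l.
Proof. reflexivity. Qed.
Lemma repl_S {A} i (y a : A) l : repl (S i) y (a :: l) = a :: repl i y l.
Proof. reflexivity. Qed.

Lemma repl_length {A} i (y : A) xs : i < length xs -> length (repl i y xs) = length xs.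
Proof. revert i; induction xs; intros [|i] H; cbn [length] in H; try lia; try reflexivity.
  rewrite repl_S; simpl; rewrite IHxs; lia. Qed.

Lemma repl_same {A} i (y : A) xs d : i < length xs -> nth i xs d = y -> repl i y xs = xs.
Proof. revert i; induction xs; intros [|i] H E; cbn [length nth] in H, E; try lia.
  - subst; reflexivity.
  - rewrite repl_S, IHxs; auto; lia. Qed.

Lemma nth_repl_other {A} i j (y : A) xs d : i <> j -> j < length xs ->
  nth j (repl i y xs) d = nth j xs d.
Proof. revert i j; induction xs; intros [|i] [|j] H L; cbn [length] in L; try lia; auto.
  rewrite repl_S; simpl. apply IHxs; lia. Qed.

Lemma mul_comm3 R x y z : kmul R x (kmul R y z) = kmul R y (kmul R x z).
Proof. rewrite !mul_assoc, (mul_comm R x y). reflexivity. Qed.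

Lemma kprod_repl R i xs : i < length xs ->
  kprod R xs = kmul R (nth i xs (zero R)) (kprod R (repl i (one R) xs)).
Proof. revert i; induction xs; intros [|i] H; cbn [length] in H; try lia.
  - rewrite repl_0. unfold kprod; simpl. rewrite mul_one_l. reflexivity.
  - rewrite repl_S. unfold kprod in *; simpl. rewrite (IHxs i) by lia. apply mul_comm3. Qed.

Lemma th_mul R th : endomorphism R th -> forall x y, th (kmul R x y) = kmul R (th x) (th y).
Proof. intros [_ [H2 H3]] x y. unfold kmul. rewrite H2.
  - simpl. rewrite map_repeat, H3. reflexivity.
  - simpl. rewrite repeat_length. pose proof (n_ge2 R); lia. Qed.

Lemma th_prod R th : endomorphism R th -> forall xs, th (kprod R xs) = kprod R (map th xs).
Proof. intros Hth xs. induction xs; simpl.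
  - destruct Hth as [_ [_ H]]; exact H.
  - unfold kprod in *; simpl. rewrite th_mul by auto. rewrite IHxs. reflexivity. Qed.

Lemma th_pow R th : endomorphism R th -> forall x r, th (kpow R x r) = kpow R (th x) r.
Proof. intros Hth x r. induction r; simpl.
  - destruct Hth as [_ [_ H]]; exact H.
  - rewrite th_mul by auto. rewrite IHr. reflexivity. Qed.

Lemma pow_add R x a b : kpow R x (a + b) = kmul R (kpow R x a) (kpow R x b).
Proof. induction a; simpl. - rewrite mul_one_l; auto. - rewrite IHa, mul_assoc. auto. Qed.

Lemma pow_mulr R x y r : kpow R (kmul R x y) r = kmul R (kpow R x r) (kpow R y r).
Proof. induction r; simpl. - rewrite mul_one_r; auto.
  - rewrite IHr. rewrite !mul_assoc. f_equal. rewrite <- !mul_assoc. f_equal. apply mul_comm. Qed.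

Lemma pow_pow R x a b : kpow R (kpow R x a) b = kpow R x (a * b).
Proof. induction b; simpl. - rewrite Nat.mul_0_r; auto.
  - rewrite IHb. replace (a * S b) with (a + a * b) by lia. rewrite pow_add. auto. Qed.

Lemma pow_1 R x : kpow R x 1 = x.
Proof. simpl. apply mul_one_r. Qed.

Lemma prod_repeat R x r : kprod R (repeat x r) = kpow R x r.
Proof. induction r; simpl; auto. unfold kprod in *; simpl; rewrite IHr; auto. Qed.

Lemma kl_pow R u l : kl R l (repeat u (l * (ar_n R - 1) + 1)) = kpow R u (l * (ar_n R - 1) + 1).
Proof.
  pose proof (n_ge2 R) as Hn.
  induction l.
  - simpl. apply eq_sym, mul_one_r.
  - simpl kl. rewrite firstn_rep, skipn_rep, firstn_rep.
    rewrite Nat.min_l by lia. rewrite IHl. rewrite Nat.min_l by lia.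
    rewrite k_prod by (simpl; rewrite repeat_length; lia).
    unfold kprod; simpl. fold (kprod R (repeat u (ar_n R - 1))). rewrite prod_repeat.
    rewrite <- pow_add. f_equal. lia.
Qed.

Definition absorbing R (E : car R -> Prop) := forall a y, E a -> E (kmul R a y).

Lemma hyp_absorb R E : hyperideal R E -> absorbing R E.
Proof. intros [_ [_ [_ [_ H]]]] a y Ha.
  pose proof (H (one R :: y :: repeat (one R) (ar_n R - 2)) 0 a) as K.
  rewrite repl_0 in K. apply K; auto.
  simpl; rewrite repeat_length; pose proof (n_ge2 R); lia. pose proof (n_ge2 R); lia. Qed.

Lemma rad_pow R E u : rad R E u -> exists r, 1 <= r /\ E (kpow R u r).
Proof. intros [[r [Hr HE]] | [l [Hl HE]]].
  - exists r. split. lia. rewrite <- prod_repeat, <- k_pad.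
    rewrite repeat_length; auto. rewrite repeat_length; lia.
  - exists (l * (ar_n R - 1) + 1). split. lia. rewrite <- kl_pow; auto. Qed.

Lemma pow_rad R E u r : absorbing R E -> 1 <= r -> E (kpow R u r) -> rad R E u.
Proof. intros Ha Hr HE. pose proof (n_ge2 R) as Hn.
  destruct (le_lt_dec r (ar_n R)).
  - left. exists r. split. lia. rewrite <- (repeat_length u r) at 2. rewrite k_pad.
    rewrite prod_repeat; auto. rewrite repeat_length; auto.
  - right. exists r. split. nia. rewrite kl_pow.
    replace (r * (ar_n R - 1) + 1) with (r + (r * (ar_n R - 1) + 1 - r)) by nia.
    rewrite pow_add. apply Ha; auto. Qed.

Lemma rad_mono R (E F : car R -> Prop) : (forall x, E x -> F x) -> forall u, rad R E u -> rad R F u.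
Proof. intros H u [[r [? ?]]|[l [? ?]]]; [left; exists r | right; exists l]; auto. Qed.

Lemma E_one_false R E : hyperideal R E -> proper R E -> E (one R) -> False.
Proof. intros Hh [x Hx] H1. apply Hx. rewrite <- (mul_one_l R x). apply hyp_absorb; auto. Qed.

Lemma min_pow R (E : car R -> Prop) a r : 1 <= r -> ~ E (kpow R a 1) -> E (kpow R a r) ->
  exists s, 1 <= s /\ ~ E (kpow R a s) /\ E (kpow R a (S s)).
Proof. induction r; intros H0 H1 H2; [lia|].
  destruct r; [contradiction|].
  destruct (classic (E (kpow R a (S r)))) as [Hr|Hr].
  - apply IHr; auto; lia.
  - exists (S r). split; [lia|auto]. Qed.

Theorem mainTheorem19 (R : KrasnerHyperring) (th : car R -> car R)
  (t : nat) (E : nat -> car R -> Prop) :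
  endomorphism R th ->
  0 < t ->
  (forall j, j < t -> endo_primary R th (E j)) ->
  (forall j l, j < t -> l < t -> forall x, rad R (E j) x <-> rad R (E l) x) ->
  endo_primary R th (fun x => forall j, j < t -> E j x).
Proof.
  intros Hth Ht HE Hrad.
  pose proof (n_ge2 R) as Hn.
  set (I := fun x => forall j, j < t -> E j x).
  assert (HId : forall j, j < t -> hyperideal R (E j)) by (intros j Hj; apply HE; auto).
  assert (Iabs : absorbing R I).
  { intros a y Ha j Hj. apply hyp_absorb; auto. }
  set (P := rad R (E 0)).
  assert (Pabs : absorbing R P).
  { intros a y Ha. destruct (rad_pow _ _ _ Ha) as [r [Hr Er]].
    apply (pow_rad _ _ _ r); auto. apply hyp_absorb; auto.
    rewrite pow_mulr. apply hyp_absorb; auto. }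
  assert (Ppow : forall b s, 1 <= s -> P (kpow R b s) -> P b).
  { intros b s Hs Hb. destruct (rad_pow _ _ _ Hb) as [r [Hr Er]].
    rewrite pow_pow in Er. apply (pow_rad _ _ _ (s * r)); auto. apply hyp_absorb; auto. nia. }
  assert (radI : forall z, rad R I z <-> P z).
  { intros z; split.
    - apply rad_mono. intros x Hx. apply Hx; auto.
    - intros Hz.
      assert (C : forall t', t' <= t -> exists N, 1 <= N /\ forall j, j < t' -> E j (kpow R z N)).
      { induction t'; intros Ht'.
        - exists 1; split; auto; intros; lia.
        - destruct IHt' as [N [HN HNj]]; [lia|].
          assert (Hr : rad R (E t') z) by (apply (Hrad t' 0); auto; lia).
          destruct (rad_pow _ _ _ Hr) as [r [Hr1 Er]].
          exists (N + r). split; [lia|]. intros j Hj. rewrite pow_add.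
          destruct (Nat.eq_dec j t').
          + subst. rewrite mul_comm. apply hyp_absorb; [apply HId; lia | auto].
          + apply hyp_absorb; [apply HId; lia | apply HNj; lia]. }
      destruct (C t (le_n t)) as [N [HN HNj]].
      apply (pow_rad _ _ _ N); auto. }
  split; [|split].
  - destruct (HId 0 Ht) as [_ [_ [Hh [Hinv _]]]].
    split; [exists (zero R); intros j Hj; apply HId; auto|].
    split; [intros j Hj; apply HId; auto|].
    split; [|split].
    + intros xs Hl Hf z Hz j Hj. destruct (HId j Hj) as [_ [_ [Hh' _]]].
      apply (Hh' xs); auto. eapply Forall_impl; [|exact Hf]. intros a Ha; apply Ha; auto.
    + intros x Hx j Hj. apply (HId j Hj). apply Hx; auto.
    + intros xs i a Hl Hi Ha j Hj. apply (HId j Hj); auto.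
  - destruct (HE 0 Ht) as [_ [[x Hx] _]]. exists x. intros H. apply Hx, H; auto.
  - intros us Hlen HI.
    destruct (classic (exists i, i < ar_n R /\ (I (nth i us (zero R)) \/ rad R I (th (kop R (repl i (one R) us)))))) as [H|H]; [exact H|exfalso].
    assert (NI : forall i, i < ar_n R -> ~ I (nth i us (zero R))) by (intros i Hi Hc; apply H; eauto).
    assert (NP : forall i, i < ar_n R -> ~ P (th (kop R (repl i (one R) us)))).
    { intros i Hi Hc; apply H; exists i; split; auto; right; apply radI; auto. }
    destruct (HE 0 Ht) as [_ [_ C0]].
    destruct (C0 us Hlen (HI 0 Ht)) as [i0 [Hi0 [E0a|Pa]]]; [|exact (NP i0 Hi0 Pa)].
    set (a := nth i0 us (zero R)) in *.
    assert (Hj1 : exists j1, j1 < t /\ ~ E j1 a).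
    { apply NNPP. intros Hc. apply (NI i0 Hi0). intros j Hj. apply NNPP. intros Hn'. apply Hc; eauto. }
    destruct Hj1 as [j1 [Hj1 Nj1]].
    assert (NPa : ~ P (th a)).
    { intros Pa. set (i1 := if Nat.eq_dec i0 0 then 1 else 0).
      assert (Hi1 : i1 < ar_n R) by (unfold i1; destruct (Nat.eq_dec i0 0); lia).
      assert (Hne : i1 <> i0) by (unfold i1; destruct (Nat.eq_dec i0 0); lia).
      apply (NP i1 Hi1).
      rewrite k_prod by (rewrite repl_length; lia).
      rewrite (kprod_repl R i0) by (rewrite repl_length; lia).
      rewrite nth_repl_other by (auto; lia). fold a.
      rewrite th_mul by auto. apply Pabs; auto. }
    assert (Pa : P a) by (apply (pow_rad _ _ _ 1); [apply hyp_absorb, HId; auto | lia | rewrite pow_1; auto]).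
    assert (Ra : rad R (E j1) a) by (apply (Hrad j1 0); auto).
    destruct (rad_pow _ _ _ Ra) as [r [Hr Er]].
    destruct (min_pow R (E j1) a r Hr ltac:(rewrite pow_1; auto) Er) as [s [Hs [Ns Es]]].
    destruct (HE j1 Hj1) as [Hh1 [Hp1 C1]].
    set (L := a :: kpow R a s :: repeat (one R) (ar_n R - 2)).
    assert (HL : length L = ar_n R) by (unfold L; simpl; rewrite repeat_length; lia).
    assert (kL : kop R L = kpow R a (S s)) by reflexivity.
    assert (toP : forall w, rad R (E j1) w -> P w) by (intros w Hw; apply (Hrad j1 0); auto; lia).
    destruct (C1 L HL ltac:(rewrite kL; auto)) as [i [Hi [Ei|Ri]]].
    + destruct i as [|[|i]].
      * apply Nj1. exact Ei.
      * apply Ns. exact Ei.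
      * apply (E_one_false R (E j1)); auto. unfold L in Ei. simpl in Ei.
        rewrite nth_repeat_lt in Ei; auto; lia.
    + apply toP in Ri. destruct i as [|[|i]].
      * apply NPa. apply (Ppow _ s); auto. rewrite <- th_pow by auto.
        unfold L in Ri. rewrite repl_0 in Ri. fold (kmul R (one R) (kpow R a s)) in Ri.
        rewrite mul_one_l in Ri. exact Ri.
      * apply NPa. unfold L in Ri. rewrite repl_S, repl_0 in Ri.
        fold (kmul R a (one R)) in Ri. rewrite mul_one_r in Ri. exact Ri.
      * apply NPa. apply (Ppow _ (S s)); [lia|]. rewrite <- th_pow by auto.
        rewrite (repl_same _ _ _ (zero R)) in Ri; [exact Ri | rewrite HL; exact Hi |].
        unfold L; simpl. apply nth_repeat_lt. lia.
Qed.
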